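(* For any positive integers $n$ and $p\ge2$, any (possibly randomized) one-way protocol for CHAIN$_p(n)$ (described in the context) with success probability at least $2/3$ must have communication complexity at least $n/(36p^2)$.
   Context: CHAIN$_p(n)$: there are $p$ players $P_1,\dots,P_p$. For each $i\in[p-1]$, player $P_i$ receives a bit string $x^i\in\{0,1\}^n$, and for each $i\in\{2,\dots,p\}$ player $P_i$ receives an index $t^i\in[n]$. It is promised that either $x^i_{t^{i+1}}=0$ for all $i\in[p-1]$ (the $0$-case) or $x^i_{t^{i+1}}=1$ for all $i\in[p-1]$ (the $1$-case); the goal is to decide which case holds. A one-way protocol consists of $p$ possibly randomized algorithms: player 1 computes a message $m_1$ from its input; for $i=2,\dots,p-1$ player $i$ computes $m_i$ from its input and $m_{i-1}$; player $p$ outputs a decision from its input and $m_{p-1}$. The communication complexity is the maximum length in bits of any $m_1,\dots,m_{p-1}$ over all inputs and randomness; the success probability is the probability (for every valid input) that the decision is correct. *)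

(* Defs.v *)
From HB Require Import structures.
From mathcomp Require Import all_boot all_order all_algebra.
From mathcomp Require Import reals.
Set Implicit Arguments. Unset Strict Implicit. Unset Printing Implicit Defensive.
Import Order.TTheory GRing.Theory Num.Theory.
Local Open Scope ring_scope.

Fixpoint bits (k : nat) : seq (seq bool) :=
  match k with
  | 0 => [:: [::]]
  | k.+1 => [seq b :: s | b <- [:: false; true], s <- bits k]
  end.

Definition strings (C : nat) : seq (seq bool) :=
  flatten [seq bits k | k <- iota 0 C.+1].

Definition is_msg_dist (R : realType) (C : nat) (d : seq bool -> R) : Prop :=
  (forall s, 0 <= d s) /\ (forall s, (C < size s)%N -> d s = 0) /\
  \sum_(s <- strings C) d s = 1.

(* A randomized one-way protocol for CHAIN_p(n) with private randomness is
   given by the output distribution of each player: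
   - first : x^1 |-> distribution of m_1
   - mid i : (x^i, t^i, m_{i-1}) |-> distribution of m_i      (2 <= i <= p-1)
   - last  : (t^p, m_{p-1}) |-> probability that player p outputs 1.  *)
Record protocol (R : realType) (n : nat) := Protocol {
  first : ('I_n -> bool) -> seq bool -> R;
  mid : nat -> ('I_n -> bool) -> 'I_n -> seq bool -> seq bool -> R;
  last : 'I_n -> seq bool -> R
}.

(* Communication complexity at most C: every message has length <= C
   with probability one (for all inputs and all incoming messages). *)
Definition valid_protocol (R : realType) (n p C : nat) (P : protocol R n) : Prop :=
  (forall x1, is_msg_dist C (first P x1)) /\
  (forall i xi ti m, (2 <= i <= p.-1)%N -> is_msg_dist C (mid P i xi ti m)) /\
  (forall tp m, 0 <= last P tp m <= 1).

(* Distribution of message m_{k+1}, given inputs x (x i = x^i) and t (t i = t^i). *)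
Fixpoint msg_dist (R : realType) (n C : nat) (P : protocol R n)
    (x : nat -> 'I_n -> bool) (t : nat -> 'I_n) (k : nat) : seq bool -> R :=
  match k with
  | 0 => first P (x 1%N)
  | k'.+1 => fun m =>
      \sum_(m' <- strings C)
        msg_dist C P x t k' m' * mid P k.+1 (x k.+1) (t k.+1) m' m
  end.

Definition prob_out1 (R : realType) (n p C : nat) (P : protocol R n)
    (x : nat -> 'I_n -> bool) (t : nat -> 'I_n) : R :=
  \sum_(m <- strings C) msg_dist C P x t (p - 2) m * last P (t p) m.

Definition chain_case (n p : nat) (x : nat -> 'I_n -> bool) (t : nat -> 'I_n)
    (b : bool) : Prop :=
  forall i, (1 <= i <= p.-1)%N -> x i (t i.+1) = b.

Definition success_prob (R : realType) (n p C : nat) (P : protocol R n)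
    (x : nat -> 'I_n -> bool) (t : nat -> 'I_n) (b : bool) : R :=
  if b then prob_out1 p C P x t else 1 - prob_out1 p C P x t.

(* Main.v *)
From HB Require Import structures.
Require Import Defs.
From mathcomp Require Import all_boot all_order all_algebra.
From mathcomp Require Import reals ring lra zify.
Set Implicit Arguments. Unset Strict Implicit. Unset Printing Implicit Defensive.
Import Order.TTheory GRing.Theory Num.Theory.
Local Open Scope ring_scope.

Definition setb n (z : {ffun 'I_n -> bool}) (s : 'I_n) (b : bool) : {ffun 'I_n -> bool} :=
  [ffun i => if i == s then b else z i].

Lemma sum_prod_ffun (R : comNzRingType) n (F : 'I_n -> bool -> R) :
  \sum_(z : {ffun 'I_n -> bool}) \prod_(i < n) F i (z i) = \prod_(i < n) (F i false + F i true).
Proof.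
rewrite -bigA_distr_bigA /=. apply: eq_bigr => i _.
by rewrite big_bool /= addrC.
Qed.

Lemma sum_sgn0 (R : comNzRingType) n (s : 'I_n) :
  \sum_(z : {ffun 'I_n -> bool}) (if z s then 1 else -1 : R) = 0.
Proof.
pose F := (fun i (b : bool) => if i == s then (if b then 1 else -1) else 1 : R).
have H : \prod_(i < n) (F i false + F i true) = 0 by rewrite (bigD1 s) //= /F eqxx addNr mul0r.
apply: (etrans _ H); rewrite -sum_prod_ffun.
apply: eq_bigr => z _. rewrite (bigD1 s) //= /F eqxx big1 ?mulr1 // => i /negbTE ->. by [].
Qed.

Lemma sum_setb (R : comNzRingType) n (s : 'I_n) (b : bool) (g : {ffun 'I_n -> bool} -> R) :
  \sum_(z : {ffun 'I_n -> bool}) g (setb z s b) = 2%:R * \sum_(z : {ffun 'I_n -> bool} | z s == b) g z.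
Proof.
rewrite (bigID (fun z : {ffun 'I_n -> bool} => z s == b)) /=.
have E1 : \sum_(z : {ffun 'I_n -> bool} | z s == b) g (setb z s b) = \sum_(z : {ffun 'I_n -> bool} | z s == b) g z.
  apply: eq_bigr => z /eqP <-; congr g; apply/ffunP => i; rewrite ffunE.
  by case: eqP => // ->.
have E2 : \sum_(z : {ffun 'I_n -> bool} | z s != b) g (setb z s b) = \sum_(z : {ffun 'I_n -> bool} | z s == b) g z.
  pose fl (z : {ffun 'I_n -> bool}) := setb z s (~~ z s).
  have flK : involutive fl.
    move=> z; apply/ffunP => i; rewrite /fl !ffunE; case: eqP => [->|//].
    by rewrite eqxx negbK.
  rewrite [RHS](reindex_inj (inv_inj flK)) /=.
  apply: eq_big => z.
    by rewrite /fl ffunE eqxx; case: (z s); case: (b).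
  move=> Hz; congr g; apply/ffunP => i; rewrite /fl !ffunE; case: eqP => // _.
  by move: Hz; case: (z s); case: (b).
by rewrite E1 E2 mulr2n mulrDl mul1r.
Qed.

Lemma sum_setb_diff (R : comNzRingType) n (s : 'I_n) (g : {ffun 'I_n -> bool} -> R) :
  \sum_(z : {ffun 'I_n -> bool}) (g (setb z s true) - g (setb z s false)) =
  2%:R * \sum_(z : {ffun 'I_n -> bool}) (if z s then 1 else -1) * g z.
Proof.
rewrite sumrB !sum_setb -mulrBr; congr (_ * _).
rewrite [in RHS](bigID (fun z : {ffun 'I_n -> bool} => z s)) /=.
rewrite [X in _ = X + _](eq_bigr (fun z => g z)); last by move=> z ->; rewrite mul1r.
rewrite [X in _ = _ + X](eq_bigr (fun z => - g z)); last by move=> z /negbTE ->; rewrite mulN1r.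
rewrite sumrN. congr (_ - _); apply: eq_bigl => z; by case: (z s).
Qed.

Lemma bern (R : realType) (x : R) (m : nat) : -1 <= x -> 1 + m%:R * x <= (1 + x) ^+ m.
Proof.
move=> hx; elim: m => [|m IH]; first by rewrite expr0 mul0r addr0.
rewrite exprSr -natr1.
have h1 : 0 <= 1 + x by lra.
have h2 : (1 + m%:R * x) * (1 + x) <= (1 + x) ^+ m * (1 + x) by rewrite ler_wpM2r.
have h3 : 0 <= m%:R * x * x.
  have : 0 <= x * x by rewrite -expr2 sqr_ge0.
  have : (0:R) <= m%:R by rewrite ler0n.
  nra.
nra.
Qed.

Lemma tangent (R : realType) (a : R) (k K : int) : 1 < a ->
  a ^ K * (1 + (k - K)%:~R * (1 - a^-1)) <= a ^ k.
Proof.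
move=> ha.
have a0 : a != 0 by rewrite gt_eqF // (lt_trans ltr01).
have -> : a ^ k = a ^ K * a ^ (k - K) by rewrite -expfzDr // addrC subrK.
have aK : 0 < a ^ K by rewrite exprz_gt0 // (lt_trans ltr01).
rewrite ler_pM2l //.
have hai : a * a^-1 = 1 by rewrite mulfV.
have hai0 : 0 < a^-1 by rewrite invr_gt0 (lt_trans ltr01).
case: (k - K) => m.
- have -> : a ^ (Posz m) = a ^+ m by [].
  have := @bern _ (a - 1) m. rewrite addrCA subrr addr0 => H.
  have H1 : -1 <= a - 1 by lra.
  have H2 := H H1.
  have H3 : 1 - a^-1 <= a - 1 by nra.
  have : (0:R) <= m%:R by rewrite ler0n.
  rewrite -pmulrn; nra.
- rewrite NegzE -exprz_inv.
  have -> : a^-1 ^ (Posz m.+1) = a^-1 ^+ m.+1 by [].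
  have := @bern _ (a^-1 - 1) m.+1. rewrite addrCA subrr addr0 => H.
  have H1 : -1 <= a^-1 - 1 by lra.
  have H2 := H H1.
  rewrite rmorphN /=. 
  have -> : ((m.+1)%:~R : R) = (m.+1)%:R by [].
  lra.
Qed.

Lemma numeric (R : realType) (n q C : nat) (a : R) : (3 <= q)%N -> (1 <= C)%N -> (4 * q ^ 2 * C <= n)%N ->
  a = 1 + q%:R^-1 ->
  2 ^+ C.+1 * (a + a^-1) ^+ n <= 2 ^+ n * a ^+ (n %/ q).
Proof.
move=> hq hC hn ea0.
set h : R := q%:R^-1.
have ea : a = 1 + h by [].
clear ea0.
have q0 : (0:R) < q%:R by rewrite ltr0n (leq_trans _ hq).
have hq3 : (3:R) <= q%:R by rewrite (ler_nat R 3 q).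
have hh : q%:R * h = 1 by rewrite mulfV // gt_eqF.
have h0 : 0 < h by rewrite invr_gt0.
have h3 : h <= 3^-1.
  by rewrite lef_pV2 ?posrE // (lt_le_trans _ hq3).
have a1 : 1 < a by rewrite ea; lra.
have a0 : 0 < a by lra.
have ai : a * a^-1 = 1 by rewrite mulfV // gt_eqF.
have ai0 : 0 < a^-1 by rewrite invr_gt0.
set b : R := 2 / (a + a^-1).
have s0 : 0 < a + a^-1 by lra.
have hb : (a + a^-1) * b = 2 by rewrite /b mulrCA mulfV ?mulr1 // gt_eqF.
have b0 : 0 < b by rewrite /b divr_gt0.
have ge2 : 2 <= a + a^-1.
  have : 0 <= (a - 1) ^+ 2 * a^-1 by rewrite mulr_ge0 ?sqr_ge0 // ltW.
  rewrite expr2; nra.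
have b1 : b <= 1.
  nra.
have bq : 1 - h / (a ^+ 2 + 1) <= b ^+ q.
  have := @bern _ (b - 1) q. rewrite addrCA subrr addr0 => H.
  have H1 : -1 <= b - 1 by lra.
  have H2 := H H1.
  suff : q%:R * (b - 1) = - (h / (a ^+ 2 + 1)) by move=> E; rewrite E in H2; lra.
  have E1 : b = 2 * a / (a ^+ 2 + 1).
    rewrite /b; apply: (@mulfI _ (a + a^-1)); first by rewrite gt_eqF.
    rewrite hb.
    have nz : a ^+ 2 + 1 != 0 by rewrite gt_eqF // addr_gt0 // exprn_gt0.
    apply: (@mulIf _ (a ^+ 2 + 1)) => //.
    rewrite mulrA -[X in _ = X]mulrA mulVf // mulr1.
    rewrite [RHS]mulrDl [a^-1 * _]mulrCA mulVf ?gt_eqF // mulr1 expr2; ring.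
  have nz : a ^+ 2 + 1 != 0 by rewrite gt_eqF // addr_gt0 // exprn_gt0.
  rewrite E1; apply: (@mulIf _ (a ^+ 2 + 1)) => //.
  rewrite -[LHS]mulrA mulrBl divfK // mul1r mulNr divfK // ea.
  have -> : 2 * (1 + h) - ((1 + h) ^+ 2 + 1) = - (h * h) by rewrite expr2; ring.
  by rewrite mulrN mulrA hh mul1r.
have bq2 : 5 / 6 <= b ^+ q.
  have : h / (a ^+ 2 + 1) <= h / 2.
    rewrite ler_pM2l // lef_pV2 ?posrE //; last by rewrite addr_gt0 // exprn_gt0.
    rewrite expr2; nra.
  lra.
have abq : 1 + h / 2 <= a * b ^+ q.
  set w := h / (a ^+ 2 + 1).
  have X : a * (1 - w) <= a * b ^+ q by rewrite ler_wpM2l // ltW.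
  have Y : w * (1 + h) <= h / 2.
    have nz : 0 < a ^+ 2 + 1 by rewrite addr_gt0 // exprn_gt0.
    rewrite /w mulrAC ler_pdivrMr // ea expr2.
    have : 0 <= h * h * h by rewrite !mulr_ge0 // ltW.
    nra.
  have E : a * (1 - w) = 1 + h - w * (1 + h) by rewrite ea; ring.
  lra.
set K := (n %/ q)%N.
have hK : (4 * q * C <= K)%N.
  rewrite /K leq_divRL ?(leq_trans _ hq) //; apply: leq_trans hn.
  have -> : (4 * q ^ 2 * C = 4 * q * C * q)%N by rewrite -mulnn !mulnA mulnAC.
  by [].
have sn0 : 0 < (a + a^-1) ^+ n by rewrite exprn_gt0.
have -> : (2:R) ^+ n = (a + a^-1) ^+ n * b ^+ n by rewrite -exprMn hb.
rewrite mulrC -mulrA ler_pM2l //.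
suff : 2 ^+ C.+1 <= a ^+ K * b ^+ n by rewrite mulrC.
have r_lt : (n %% q <= q)%N by apply: ltnW; rewrite ltn_mod (leq_trans _ hq).
have E1 : b ^+ q <= b ^+ (n %% q) by apply: ler_wiXn2l => //; apply: ltW.
have E2 : a ^+ K * b ^+ n >= (a * b ^+ q) ^+ K * b ^+ q.
  rewrite [in b ^+ n](divn_eq n q) exprD -/K exprMn -exprM mulnC -mulrA.
  by rewrite ler_pM2l ?exprn_gt0 // ler_pM2l ?exprn_gt0.
have E3 : (1 + h / 2) ^+ K <= (a * b ^+ q) ^+ K.
  apply: lerXn2r => //; rewrite nnegrE; [lra|].
  by rewrite mulr_ge0 // ?exprn_ge0 // ltW.
have E4 : (1 + h / 2) ^+ (4 * q * C)%N <= (1 + h / 2) ^+ K.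
  by apply: ler_weXn2l => //; lra.
have E5 : 3 / 2 <= (1 + h / 2) ^+ q.
  have := @bern _ (h / 2) q. 
  have -> : q%:R * (h / 2) = 1 / 2 by rewrite mulrA hh.
  move=> H; have := H ltac:(lra). lra.
have E6 : (3 / 2) ^+ (4 * C)%N <= (1 + h / 2) ^+ (4 * q * C)%N.
  have -> : (4*q*C = q*(4*C))%N by rewrite mulnCA mulnA.
  rewrite [X in _ <= X]exprM. apply: lerXn2r => //; rewrite nnegrE; first lra.
  by rewrite exprn_ge0 //; lra.
have E7 : (2:R) ^+ C.+1 <= (3 / 2) ^+ (4 * C)%N * (5 / 6).
  rewrite exprM exprS.
  have -> : ((3:R) / 2) ^+ 4 = (81 / 32) * 2 by rewrite !exprS expr0; field.
  rewrite exprMn.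
  have F : (81 / 32 : R) <= (81 / 32) ^+ C.
    by rewrite -[X in X <= _]expr1; apply: ler_weXn2l => //; lra.
  have G : 0 < (2:R) ^+ C by rewrite exprn_gt0.
  nra.
have F1 : 0 <= (1 + h / 2) ^+ K by rewrite exprn_ge0 //; lra.
have F2 : 0 <= (3 / 2 : R) ^+ (4 * C)%N by rewrite exprn_ge0 //; lra.
nra.
Qed.

Lemma nil_in_strings C : [::] \in strings C.
Proof. by rewrite /strings /= inE eqxx. Qed.

Lemma size_bits k : size (bits k) = (2 ^ k)%N.
Proof.
elim: k => [//|k IH] /=. rewrite !size_cat !size_map IH expnS /=. lia.
Qed.

Lemma size_strings C : (size (strings C)).+1 = (2 ^ C.+1)%N.
Proof.
elim: C => [//|C IH].
have E : iota 0 C.+2 = iota 0 C.+1 ++ [:: C.+1] by rewrite -addn1 iotaD.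
rewrite /strings E map_cat flatten_cat size_cat.
have -> : flatten [seq bits k | k <- [:: C.+1]] = bits C.+1 by rewrite /= cats0.
rewrite size_bits -/(strings C) -addSn IH !expnS. lia.
Qed.

Fixpoint am (R : realType) (f : seq bool -> R) (m0 : seq bool) (s : seq (seq bool)) : seq bool :=
  match s with
  | [::] => m0
  | m :: s' => let a := am f m0 s' in if f a < f m then m else a
  end.

Lemma am_spec (R : realType) (f : seq bool -> R) m0 s :
  am f m0 s \in m0 :: s /\ forall m, m \in m0 :: s -> f m <= f (am f m0 s).
Proof.
elim: s => [|m s [IH1 IH2]] /=.
  by split; [rewrite inE eqxx | move=> m; rewrite inE => /eqP ->].
case: ifP => H; split.
- by rewrite !inE eqxx orbT.
- move=> m'; rewrite !inE => /or3P [/eqP ->|/eqP ->|Hm].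
  + by apply: le_trans (ltW H); apply: IH2; rewrite inE eqxx.
  + by [].
  + by apply: le_trans (ltW H); apply: IH2; rewrite inE Hm orbT.
- by move: IH1; rewrite !inE => /orP [->|->]; rewrite ?orbT.
- move=> m'; rewrite !inE => /or3P [/eqP ->|/eqP ->|Hm].
  + by apply: IH2; rewrite inE eqxx.
  + by rewrite leNgt H.
  + by apply: IH2; rewrite inE Hm orbT.
Qed.

Lemma sum_part (R : realType) (T : finType) (phi : T -> seq bool) (r : seq (seq bool)) (F : T -> R) :
  uniq r -> (forall z, phi z \in r) ->
  \sum_(z : T) F z = \sum_(m <- r) \sum_(z : T | phi z == m) F z.
Proof.
move=> ur hr.
rewrite (eq_bigr (fun m => \sum_(z : T) (if phi z == m then F z else 0))); last first.
  by move=> m _; rewrite big_mkcond.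
rewrite exchange_big; apply: eq_bigr => z _.
rewrite (big_rem (phi z)) //= eqxx big1_seq ?addr0 //.
move=> m /andP [_ Hm]; case: eqP => // E.
by rewrite -E mem_rem_uniqF in Hm.
Qed.

Lemma sum_const_seq (R : realType) (T : Type) (r : seq T) (x : R) :
  \sum_(m <- r) x = x *+ size r.
Proof. elim: r => [|m r IH]; by rewrite ?big_nil ?big_cons ?IH ?mulrS. Qed.

Definition ce (b c : bool) : int := if b == c then 1 else -1.

Lemma prod_pow (R : realType) (a : R) n (z w : 'I_n -> bool) : a != 0 ->
  \prod_(s < n) (if z s == w s then a else a^-1) = a ^ (\sum_(s < n) ce (z s) (w s)).
Proof.
move=> a0.
rewrite (big_morph (fun k : int => a ^ k) (id1 := 1) (op1 := *%R) (fun m k => expfzDr m k a0)) ?expr0z //.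
apply: eq_bigr => s _; rewrite /ce. case: (z s == w s). by rewrite expr1z. by rewrite exprN1.
Qed.

Lemma sum_prod_pow (R : realType) (a : R) n (w : 'I_n -> bool) :
  \sum_(z : {ffun 'I_n -> bool}) \prod_(s < n) (if z s == w s then a else a^-1) = (a + a^-1) ^+ n.
Proof.
pose F := (fun s (b : bool) => if b == w s then a else a^-1).
apply: (etrans (sum_prod_ffun F)).
rewrite (eq_bigr (fun _ => a + a^-1)); last by move=> s _; rewrite /F; case: (w s) => /=; [rewrite addrC|].
by rewrite prodr_const card_ord.
Qed.

Lemma core (R : realType) n C q (phi : {ffun 'I_n -> bool} -> seq bool) (v : seq bool -> 'I_n -> bool) :
  (0 < n)%N -> (3 <= q)%N -> (4 * q ^ 2 * C <= n)%N -> (forall z, phi z \in strings C) ->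
  q%:R * \sum_(z : {ffun 'I_n -> bool}) \sum_(s < n) (if z s == v (phi z) s then 1 else -1 : R)
   < (2 ^ n * n)%:R.
Proof.
move=> n0 q3 hn hphi.
have q0 : (0 < q)%N by apply: leq_trans q3.
case: C hn hphi => [|C] hn hphi.
  have E : forall z, phi z = [::] by move=> z; move: (hphi z); rewrite /strings /= inE => /eqP.
  rewrite (eq_bigr (fun z : {ffun 'I_n -> bool} => \sum_(s < n) (if z s then 1 else -1) * (if v [::] s then 1 else -1)));
   last by move=> z _; apply: eq_bigr => s _; rewrite E; case: (z s); case: (v [::] s); rewrite /= ?mulr1 ?mul1r ?mulN1r ?opprK.
  rewrite exchange_big /= big1 ?mulr0 ?ltr0n ?muln_gt0 ?expn_gt0 //.
  by move=> s _; rewrite -mulr_suml sum_sgn0 mul0r.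
rewrite ltNge; apply/negP => H.
set a : R := 1 + q%:R^-1.
set K := (n %/ q)%N.
have hq3 : (0:R) < q%:R by rewrite ltr0n.
have a1 : 1 < a by rewrite /a ltrDl invr_gt0.
have a0 : a != 0 by rewrite gt_eqF // (lt_trans ltr01).
set c := fun z : {ffun 'I_n -> bool} => \sum_(s < n) ce (z s) (v (phi z) s).
have Ec : forall z, (c z)%:~R = \sum_(s < n) (if z s == v (phi z) s then 1 else -1 : R).
  move=> z; rewrite /c rmorph_sum /=; apply: eq_bigr => s _; rewrite /ce; by case: eqP.
have HS : (2 ^ n)%:R * K%:R <= \sum_z ((c z)%:~R : R).
  rewrite (eq_bigr _ (fun z _ => Ec z)).
  rewrite -(ler_pM2l hq3); apply: le_trans H.
  by rewrite -!natrM ler_nat mulnCA leq_mul2l mulnC leq_divM orbT.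
have low : (2 ^ n)%:R * a ^+ K <= \sum_z a ^ (c z).
  apply: le_trans (ler_sum _ (fun z _ => tangent (c z) (Posz K) a1)).
  rewrite -mulr_sumr. change (a ^ (Posz K)) with (a ^+ K).
  rewrite mulrC ler_pM2l; last by rewrite exprn_gt0 // (lt_trans ltr01).
  rewrite big_split /= sumr_const card_ffun card_bool card_ord -mulr_suml.
  rewrite -[X in X <= _]addr0 lerD2l mulr_ge0 //; last first.
    by rewrite subr_ge0 invf_le1 ?ltW // (lt_trans ltr01).
  rewrite (eq_bigr (fun z => (c z)%:~R - K%:R)); last by move=> z _; rewrite rmorphB.
  rewrite sumrB sumr_const card_ffun card_bool card_ord subr_ge0.
  by rewrite -(mulr_natl (K%:R : R) (2 ^ n)).
set M := undup (strings C.+1).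
have hM : forall z, phi z \in M by move=> z; rewrite mem_undup.
have up : \sum_z a ^ (c z) <= (size M)%:R * (a + a^-1) ^+ n.
  have : \sum_z a ^ (c z) <= \sum_(z : {ffun 'I_n -> bool}) \sum_(m <- M) \prod_(s < n) (if z s == v m s then a else a^-1).
    apply: ler_sum => z _.
    rewrite (big_rem (phi z)) //= /c -prod_pow // -[X in X <= _]addr0 lerD2l.
    by apply: sumr_ge0 => m _; apply: prodr_ge0 => s _; case: eqP => _; rewrite ?invr_ge0 ltW // (lt_trans ltr01).
  move=> Hs; apply: (le_trans Hs); rewrite exchange_big /=.
  rewrite (eq_bigr (fun _ => (a + a^-1) ^+ n)); last by move=> m _; rewrite sum_prod_pow.
  by rewrite sum_const_seq mulr_natl.
have szM : (size M < 2 ^ C.+2)%N.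
  by rewrite -size_strings ltnS size_undup.
have num := numeric (R := R) (n := n) (q := q) (C := C.+1) q3 isT hn erefl.
have pos : 0 < (a + a^-1) ^+ n by rewrite exprn_gt0 // addr_gt0 // ?invr_gt0 (lt_trans ltr01).
have : (size M)%:R * (a + a^-1) ^+ n < 2 ^+ C.+2 * (a + a^-1) ^+ n.
  by rewrite ltr_pM2r // -natrX ltr_nat.
rewrite -/a -/K in num.
move: (le_trans low up) num; rewrite natrX.
move=> X Y Z; have := lt_le_trans (le_lt_trans X Z) Y. by rewrite ltxx.
Qed.

Lemma ler_sum_seq (R : realType) (T : eqType) (r : seq T) (F G : T -> R) :
  (forall i, i \in r -> true -> F i <= G i) -> \sum_(i <- r) F i <= \sum_(i <- r) G i.
Proof.
elim: r => [|x r IH] H; first by rewrite !big_nil.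
rewrite !big_cons lerD //; first by apply: H; rewrite ?inE ?eqxx.
by apply: IH => i Hi _; apply: H; rewrite // inE Hi orbT.
Qed.

Definition sg (R : realType) (b : bool) : R := if b then 1 else -1.

Lemma sg_ind (R : realType) (b c : bool) :
  sg R b * (if c then 1 else 0) = 2%:R^-1 * ((if b == c then 1 else -1) + sg R b).
Proof. by case: b; case: c; rewrite /sg /=; field. Qed.

Lemma index_lemma (R : realType) n C q (al : {ffun 'I_n -> bool} -> seq bool -> R)
    (be : 'I_n -> seq bool -> R) (B : R) :
  (0 < n)%N -> (3 <= q)%N -> (4 * q ^ 2 * C <= n)%N -> 0 < B ->
  (forall X m, 0 <= al X m) -> (forall X, \sum_(m <- strings C) al X m = 1) ->
  (forall s m, 0 <= be s m <= B) ->
  q%:R * (\sum_(z : {ffun 'I_n -> bool}) \sum_(s < n) \sum_(m <- strings C)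
          (al (setb z s true) m - al (setb z s false) m) * be s m) < B * (2 ^ n * n)%:R.
Proof.
move=> n0 q3 hn B0 al0 al1 be01.
set M := strings C.
pose f (s : 'I_n) (X : {ffun 'I_n -> bool}) := \sum_(m <- M) al X m * be s m.
pose G (z : {ffun 'I_n -> bool}) m := \sum_(s < n) sg R (z s) * be s m.
pose phi z := am (G z) [::] M.
have phiM : forall z, phi z \in M.
  move=> z; have [H _] := am_spec (G z) [::] M; rewrite /phi.
  by move: H; rewrite inE => /orP [/eqP ->|//]; apply: nil_in_strings.
have phimax : forall z m, m \in M -> G z m <= G z (phi z).
  by move=> z m Hm; have [_ H] := am_spec (G z) [::] M; apply: H; rewrite inE Hm orbT.
set M' := undup M.
have uM' : uniq M' by apply: undup_uniq.
have phiM' : forall z, phi z \in M' by move=> z; rewrite mem_undup.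
pose S m s := \sum_(z : {ffun 'I_n -> bool} | phi z == m) sg R (z s).
pose v m (s : 'I_n) := 0 < S m s.
set T := \sum_(z : {ffun 'I_n -> bool}) \sum_(s < n) (if z s == v (phi z) s then 1 else -1 : R).
have coreT := @core R n C q phi v n0 q3 hn phiM.
rewrite -/T in coreT.
have E1 : \sum_(z : {ffun 'I_n -> bool}) \sum_(s < n) \sum_(m <- M)
          (al (setb z s true) m - al (setb z s false) m) * be s m
        = 2%:R * \sum_(s < n) \sum_(z : {ffun 'I_n -> bool}) sg R (z s) * f s z.
  rewrite exchange_big /= mulr_sumr; apply: eq_bigr => s _.
  rewrite -sum_setb_diff; apply: eq_bigr => z _.
  by rewrite /f -sumrB; apply: eq_bigr => m _; rewrite mulrBl.
have E2 : \sum_(s < n) \sum_(z : {ffun 'I_n -> bool}) sg R (z s) * f s z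
        = \sum_(z : {ffun 'I_n -> bool}) \sum_(m <- M) al z m * G z m.
  rewrite exchange_big /=; apply: eq_bigr => z _.
  rewrite /f /G (eq_bigr (fun s => \sum_(m <- M) sg R (z s) * (al z m * be s m))); last first.
    by move=> s _; rewrite mulr_sumr.
  rewrite exchange_big /=; apply: eq_bigr => m _.
  rewrite mulr_sumr; apply: eq_bigr => s _; by rewrite mulrCA.
have E3 : \sum_(z : {ffun 'I_n -> bool}) \sum_(m <- M) al z m * G z m
        <= \sum_(z : {ffun 'I_n -> bool}) G z (phi z).
  apply: ler_sum => z _.
  apply: (le_trans (y := \sum_(m <- M) al z m * G z (phi z))).
    by apply: ler_sum_seq => m Hm _; apply: ler_wpM2l => //; apply: phimax.
  by rewrite -mulr_suml al1 mul1r.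
have E4 : \sum_(z : {ffun 'I_n -> bool}) G z (phi z)
        <= B * \sum_(s < n) \sum_(z : {ffun 'I_n -> bool}) sg R (z s) * (if v (phi z) s then 1 else 0).
  rewrite /G exchange_big /= mulr_sumr; apply: ler_sum => s _.
  rewrite (sum_part _ uM' phiM') (sum_part (fun z : {ffun 'I_n -> bool} => sg R (z s) * (if v (phi z) s then 1 else 0)) uM' phiM').
  rewrite mulr_sumr; apply: ler_sum_seq => m _ _.
  rewrite (eq_bigr (fun z : {ffun 'I_n -> bool} => be s m * sg R (z s))); last by move=> z /eqP ->; rewrite mulrC.
  rewrite [X in _ <= _ * X](eq_bigr (fun z : {ffun 'I_n -> bool} => (if v m s then 1 else 0) * sg R (z s))); last by move=> z /eqP ->; rewrite mulrC.
  rewrite -!mulr_sumr -/(S m s) mulrA /v.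
  have [hb0 hb1] := andP (be01 s m).
  case: ltP => HS.
    by rewrite mulr1 ler_pM2r.
  rewrite mulr0 mul0r.
  by rewrite mulr_ge0_le0.
have E5 : 2%:R * \sum_(s < n) \sum_(z : {ffun 'I_n -> bool}) sg R (z s) * (if v (phi z) s then 1 else 0) = T.
  rewrite /T [RHS]exchange_big /= mulr_sumr; apply: eq_bigr => s _.
  rewrite (eq_bigr (fun z : {ffun 'I_n -> bool} => 2%:R^-1 * ((if z s == v (phi z) s then 1 else -1) + sg R (z s)))); last first.
    by move=> z _; rewrite sg_ind.
  rewrite -mulr_sumr mulrA mulfV ?pnatr_eq0 // mul1r big_split /=.
  by rewrite [X in _ + X = _](sum_sgn0 R s) addr0.
have HD : \sum_(z : {ffun 'I_n -> bool}) \sum_(s < n) \sum_(m <- M)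
          (al (setb z s true) m - al (setb z s false) m) * be s m <= B * T.
  rewrite E1 E2 -E5 mulrCA ler_pM2l ?ltr0n //.
  by apply: le_trans E4.
have q0 : (0:R) < q%:R by rewrite ltr0n (leq_trans _ q3).
apply: (le_lt_trans (y := q%:R * (B * T))); first by rewrite ler_pM2l.
by rewrite mulrCA ltr_pM2l.
Qed.

Definition updx n (x : nat -> 'I_n -> bool) (j : nat) (v : 'I_n -> bool) : nat -> 'I_n -> bool :=
  fun i => if i == j then v else x i.
Definition updt n (t : nat -> 'I_n) (j : nat) (v : 'I_n) : nat -> 'I_n :=
  fun i => if i == j then v else t i.

Definition SumOp (R : realType) n (j : nat) (b : bool)
  (g : (nat -> 'I_n -> bool) -> (nat -> 'I_n) -> R) (x : nat -> 'I_n -> bool) (t : nat -> 'I_n) : R :=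
  \sum_(z : {ffun 'I_n -> bool}) \sum_(s < n) g (updx x j (setb z s b)) (updt t j.+1 s).

Fixpoint H (R : realType) n (p k r : nat) (g : (nat -> 'I_n -> bool) -> (nat -> 'I_n) -> R) :
   (nat -> 'I_n -> bool) -> (nat -> 'I_n) -> R :=
  match r with
  | 0 => g
  | r'.+1 => SumOp (p.-1 - r') (p.-1 - r' <= k)%N (H p k r' g)
  end.

Lemma SumOp_ext (R : realType) n j b (g1 g2 : (nat -> 'I_n -> bool) -> (nat -> 'I_n) -> R) x t :
  (forall x t, g1 x t = g2 x t) -> SumOp j b g1 x t = SumOp j b g2 x t.
Proof. by move=> E; apply: eq_bigr => z _; apply: eq_bigr => s _; apply: E. Qed.

Lemma H_ext (R : realType) n p k (g1 g2 : (nat -> 'I_n -> bool) -> (nat -> 'I_n) -> R) :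
  (forall x t, g1 x t = g2 x t) -> forall r x t, H p k r g1 x t = H p k r g2 x t.
Proof.
move=> E; elim=> [|r IH] x t /=; first exact: E.
by apply: SumOp_ext.
Qed.

Lemma sum_lt (R : realType) (T : finType) (F G : T -> R) :
  (0 < #|T|)%N -> (forall i, F i < G i) -> \sum_(i : T) F i < \sum_(i : T) G i.
Proof.
move=> hT hFG; case/card_gt0P: hT => i0 _.
rewrite (bigD1 i0) //= [X in _ < X](bigD1 i0) //= ltr_leD //.
by apply: ler_sum => i _; apply: ltW.
Qed.

Lemma card_ffun_gt0 n : (0 < #|{ffun 'I_n -> bool}|)%N.
Proof. by rewrite card_ffun card_bool expn_gt0. Qed.

Lemma sum2_const (R : realType) n (c : R) :
  \sum_(z : {ffun 'I_n -> bool}) \sum_(s < n) c = c * (2 ^ n * n)%:R.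
Proof.
rewrite (eq_bigr (fun _ => c *+ n)); last by move=> z _; rewrite sumr_const card_ord.
by rewrite sumr_const card_ffun card_bool card_ord -mulrnA mulr_natr mulnC.
Qed.

Lemma SumOp_lb (R : realType) n j b (g : (nat -> 'I_n -> bool) -> (nat -> 'I_n) -> R) (P : _ -> _ -> Prop) lo x t :
  (forall z s, P (updx x j (setb z s b)) (updt t j.+1 s)) ->
  (forall x t, P x t -> lo <= g x t) -> lo * (2 ^ n * n)%:R <= SumOp j b g x t.
Proof.
move=> HP Hg; rewrite -sum2_const; apply: ler_sum => z _; apply: ler_sum => s _.
by apply: Hg.
Qed.

Lemma SumOp_ub (R : realType) n j b (g : (nat -> 'I_n -> bool) -> (nat -> 'I_n) -> R) (P : _ -> _ -> Prop) hi x t :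
  (forall z s, P (updx x j (setb z s b)) (updt t j.+1 s)) ->
  (forall x t, P x t -> g x t <= hi) -> SumOp j b g x t <= hi * (2 ^ n * n)%:R.
Proof.
move=> HP Hg; rewrite -sum2_const; apply: ler_sum => z _; apply: ler_sum => s _.
by apply: Hg.
Qed.

Lemma H_bounds (R : realType) n p k (g : (nat -> 'I_n -> bool) -> (nat -> 'I_n) -> R) lo hi :
  (forall x t, lo <= g x t <= hi) ->
  forall r x t, lo * (2 ^ n * n)%:R ^+ r <= H p k r g x t <= hi * (2 ^ n * n)%:R ^+ r.
Proof.
move=> Hg; elim=> [|r IH] x t /=; first by rewrite !expr0 !mulr1.
apply/andP; split.
  rewrite exprSr mulrA; apply: (SumOp_lb (P := fun _ _ => True)) => // x' t' _.
  by case/andP: (IH x' t').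
rewrite exprSr mulrA; apply: (SumOp_ub (P := fun _ _ => True)) => // x' t' _.
by case/andP: (IH x' t').
Qed.

Definition links n (x : nat -> 'I_n -> bool) (t : nat -> 'I_n) (m : nat) (bb : bool) :=
  forall i, (1 <= i <= m)%N -> x i (t i.+1) = bb.

Lemma links_upd n (x : nat -> 'I_n -> bool) (t : nat -> 'I_n) j bb z s :
  links x t j.-1 bb -> links (updx x j (setb z s bb)) (updt t j.+1 s) j bb.
Proof.
move=> Hl i /andP [i1 ij]; rewrite /updx /updt eqSS.
case: ifP => [/eqP Eij|ne]; first by rewrite ffunE eqxx.
apply: Hl; rewrite i1 /=. lia.
Qed.

Lemma H_promise (R : realType) n p k bb (g : (nat -> 'I_n -> bool) -> (nat -> 'I_n) -> R) lo hi :
  (forall j, (1 <= j <= p.-1)%N -> (j <= k)%N = bb) ->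
  (forall x t, links x t p.-1 bb -> lo <= g x t <= hi) ->
  forall r, (r <= p.-1)%N -> forall x t, links x t (p.-1 - r) bb ->
   lo * (2 ^ n * n)%:R ^+ r <= H p k r g x t <= hi * (2 ^ n * n)%:R ^+ r.
Proof.
move=> Hb Hg; elim=> [|r IH] hr x t Hl /=.
  by rewrite !expr0 !mulr1; apply: Hg; rewrite subn0 in Hl.
have Hj : (1 <= p.-1 - r <= p.-1)%N by lia.
rewrite (Hb _ Hj).
have HP : forall z s, links (updx x (p.-1 - r) (setb z s bb)) (updt t (p.-1 - r).+1 s) (p.-1 - r) bb.
  move=> z s; apply: links_upd.
  by have -> : ((p.-1 - r).-1 = p.-1 - r.+1)%N by lia.
apply/andP; split.
  rewrite exprSr mulrA; apply: (SumOp_lb (P := fun x t => links x t (p.-1 - r) bb)) => // x' t' H'.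
  by case/andP: (IH (ltnW hr) x' t' H').
rewrite exprSr mulrA; apply: (SumOp_ub (P := fun x t => links x t (p.-1 - r) bb)) => // x' t' H'.
by case/andP: (IH (ltnW hr) x' t' H').
Qed.

Lemma tele (R : realType) n p k (g : (nat -> 'I_n -> bool) -> (nat -> 'I_n) -> R) (Q : R) :
  (0 < n)%N -> (1 <= k <= p.-1)%N -> 0 <= Q ->
  (forall x t, Q * (SumOp k true (H p k (p.-1 - k) g) x t - SumOp k false (H p k (p.-1 - k) g) x t)
                < (2 ^ n * n)%:R ^+ (p - k)) ->
  forall x t, Q * (H p k p.-1 g x t - H p k.-1 p.-1 g x t) < (2 ^ n * n)%:R ^+ p.-1.
Proof.
move=> n0 hk Q0 Hk.
have Heq : forall r, (r <= p.-1 - k)%N -> forall x t, H p k r g x t = H p k.-1 r g x t.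
  elim=> [//|r IH] hr x t /=.
  have -> : (p.-1 - r <= k.-1)%N = (p.-1 - r <= k)%N by apply/idP/idP; lia.
  by apply: SumOp_ext => x' t'; apply: IH; lia.
have Hlev : forall d, (d <= k.-1)%N -> forall x t,
    Q * (H p k (p - k + d) g x t - H p k.-1 (p - k + d) g x t) < (2 ^ n * n)%:R ^+ (p - k + d).
  elim=> [|d IH] hd x t.
    rewrite addn0.
    have E : (p - k = (p.-1 - k).+1)%N by lia.
    rewrite E /=.
    have -> : (p.-1 - (p.-1 - k) = k)%N by lia.
    rewrite leqnn.
    have -> : (k <= k.-1)%N = false by apply/negP; lia.
    rewrite -(SumOp_ext _ _ _ _ (Heq _ (leqnn _))) -E.
    exact: Hk.
  have E : (p - k + d.+1 = (p - k + d).+1)%N by lia.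
  rewrite E /=.
  have -> : (p.-1 - (p - k + d) <= k)%N = true by apply/idP; lia.
  have -> : (p.-1 - (p - k + d) <= k.-1)%N = true by apply/idP; lia.
  rewrite /SumOp -!sumrB mulr_sumr exprSr -sum2_const.
  apply: sum_lt; first exact: card_ffun_gt0.
  move=> z; rewrite -sumrB mulr_sumr; apply: sum_lt; first by rewrite card_ord.
  move=> s; apply: IH; lia.
have -> : (p.-1 = p - k + k.-1)%N by lia.
by apply: Hlev.
Qed.

Fixpoint Vf (R : realType) n p C (P : protocol R n) (x : nat -> 'I_n -> bool) (t : nat -> 'I_n)
    (d : nat) (m : seq bool) : R :=
  match d with
  | 0 => Defs.last P (t p) m
  | d'.+1 => \sum_(m' <- strings C) Defs.mid P (p.-1 - d')%N (x (p.-1 - d')%N) (t (p.-1 - d')%N) m m'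
               * Vf p C P x t d' m'
  end.

Lemma decomp (R : realType) n p C (P : protocol R n) x t :
  (2 <= p)%N -> forall d, (d <= p - 2)%N ->
  prob_out1 p C P x t = \sum_(m <- strings C) msg_dist C P x t (p - 2 - d) m * Vf p C P x t d m.
Proof.
move=> p2; elim=> [|d IH] hd; first by rewrite subn0.
rewrite IH; last lia.
have E : (p - 2 - d = (p - 2 - d.+1).+1)%N by lia.
rewrite E /=.
under eq_bigr do rewrite mulr_suml.
rewrite exchange_big /=; apply: eq_bigr => m' _.
rewrite mulr_sumr; apply: eq_bigr => m _.
have -> : ((p - 2 - d.+1).+2 = p.-1 - d)%N by lia.
by rewrite mulrA.
Qed.

Lemma msg_dist_ext (R : realType) n C (P : protocol R n) x x' t t' :
  forall i m, (forall j, (j <= i.+1)%N -> x j = x' j) -> (forall j, (j <= i.+1)%N -> t j = t' j) ->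
  msg_dist C P x t i m = msg_dist C P x' t' i m.
Proof.
elim=> [|i IH] m Hx Ht /=; first by rewrite Hx.
apply: eq_bigr => m' _.
rewrite (IH m'); [|by move=> j hj; apply: Hx; lia|by move=> j hj; apply: Ht; lia].
by rewrite Hx // Ht.
Qed.

Lemma Vf_ext (R : realType) n p C (P : protocol R n) x x' t t' :
  (0 < p)%N -> forall d m, (d <= p.-1)%N -> (forall j, (p.-1 - d < j)%N -> x j = x' j) ->
  (forall j, (p.-1 - d < j)%N -> t j = t' j) ->
  Vf p C P x t d m = Vf p C P x' t' d m.
Proof.
move=> p0; elim=> [|d IH] m hd Hx Ht /=; first by rewrite Ht //; lia.
apply: eq_bigr => m' _.
rewrite (IH m'); [|lia|by move=> j hj; apply: Hx; lia|by move=> j hj; apply: Ht; lia].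
by rewrite Hx ?Ht //; lia.
Qed.

Lemma msg_dist_dist (R : realType) n p C (P : protocol R n) x t :
  valid_protocol p C P -> forall i, (i <= p - 2)%N ->
  (forall m, 0 <= msg_dist C P x t i m) /\ \sum_(m <- strings C) msg_dist C P x t i m = 1.
Proof.
move=> [Hf [Hm Hl]]; elim=> [|i IH] hi /=.
  by have [H0 [_ H1]] := Hf (x 1%N); split.
have hi' : (i <= p - 2)%N by lia.
have [IH1' IH2'] := IH hi'.
have Hmid : forall m', is_msg_dist C (Defs.mid P i.+2 (x i.+2) (t i.+2) m').
  by move=> m'; apply: Hm; lia.
split.
  move=> m; apply: sumr_ge0 => m' _; apply: mulr_ge0 => //.
  by case: (Hmid m') => H0 _; apply: H0.
rewrite exchange_big /= -IH2'; apply: eq_bigr => m' _.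
by rewrite -mulr_sumr; case: (Hmid m') => _ [_ ->]; rewrite mulr1.
Qed.

Lemma Vf_bounds (R : realType) n p C (P : protocol R n) x t :
  valid_protocol p C P -> (2 <= p)%N -> forall d, (d <= p - 2)%N -> forall m,
  0 <= Vf p C P x t d m <= 1.
Proof.
move=> [Hf [Hm Hl]] p2; elim=> [|d IH] hd m /=; first exact: Hl.
have Hmid : is_msg_dist C (Defs.mid P (p.-1 - d)%N (x (p.-1 - d)%N) (t (p.-1 - d)%N) m).
  by apply: Hm; lia.
case: Hmid => H0 [_ H1].
apply/andP; split.
  apply: sumr_ge0 => m' _; apply: mulr_ge0 => //.
  by case/andP: (IH (ltnW hd) m').
rewrite -[X in _ <= X]H1; apply: ler_sum => m' _.
case/andP: (IH (ltnW hd) m') => _ h1.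
by rewrite -[X in _ <= X]mulr1 ler_wpM2l.
Qed.

Lemma prob_bounds (R : realType) n p C (P : protocol R n) x t :
  valid_protocol p C P -> (2 <= p)%N -> 0 <= prob_out1 p C P x t <= 1.
Proof.
move=> V p2; rewrite (@decomp R n p C P x t p2 0) // subn0.
have [H0 H1] := msg_dist_dist x t V (leqnn (p - 2)).
apply/andP; split.
  apply: sumr_ge0 => m _; apply: mulr_ge0 => //.
  by case/andP: (Vf_bounds x t V p2 (leq0n _) m).
rewrite -[X in _ <= X]H1; apply: ler_sum => m _.
case/andP: (Vf_bounds x t V p2 (leq0n _) m) => _ h1.
by rewrite -[X in _ <= X]mulr1 ler_wpM2l.
Qed.

Definition respects (R : realType) n (Px Pt : nat -> bool) (g : (nat -> 'I_n -> bool) -> (nat -> 'I_n) -> R) :=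
  forall x x' t t', (forall j, Px j -> x j = x' j) -> (forall j, Pt j -> t j = t' j) -> g x t = g x' t'.

Lemma H_resp (R : realType) n p k (Px Pt : nat -> bool) (g : (nat -> 'I_n -> bool) -> (nat -> 'I_n) -> R) :
  respects Px Pt g -> forall r, respects Px Pt (H p k r g).
Proof.
move=> Hg; elim=> [//|r IH] x x' t t' Hx Ht /=.
apply: eq_bigr => z _; apply: eq_bigr => s _; apply: IH.
  by move=> j hj; rewrite /updx; case: eqP => // _; apply: Hx.
by move=> j hj; rewrite /updt; case: eqP => // _; apply: Ht.
Qed.

Lemma Hlin (R : realType) n p k (a : (nat -> 'I_n -> bool) -> (nat -> 'I_n) -> seq bool -> R)
    (h : seq bool -> (nat -> 'I_n -> bool) -> (nat -> 'I_n) -> R) (r0 : seq (seq bool)) :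
  (forall m, respects (fun j => (j <= k)%N) (fun j => (j <= k)%N) (fun x t => a x t m)) ->
  forall r, (r <= p.-1 - k)%N -> forall x t,
  H p k r (fun x t => \sum_(m <- r0) a x t m * h m x t) x t = \sum_(m <- r0) a x t m * H p k r (h m) x t.
Proof.
move=> Ha; elim=> [//|r IH] hr x t /=.
rewrite /SumOp.
rewrite (eq_bigr (fun z => \sum_(s < n) \sum_(m <- r0) a x t m *
      H p k r (h m) (updx x (p.-1 - r) (setb z s (p.-1 - r <= k)%N)) (updt t (p.-1 - r).+1 s))); last first.
  move=> z _; apply: eq_bigr => s _; rewrite IH; last lia.
  apply: eq_bigr => m _; congr (_ * _); apply: Ha.
    by move=> j hj; rewrite /updx; case: eqP => // E; lia.
  by move=> j hj; rewrite /updt; case: eqP => // E; lia.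
under eq_bigr do rewrite exchange_big /=.
rewrite exchange_big /=; apply: eq_bigr => m _.
rewrite mulr_sumr; apply: eq_bigr => z _; by rewrite mulr_sumr.
Qed.

Lemma level (R : realType) n p C (P : protocol R n) k q :
  valid_protocol p C P -> (2 <= p)%N -> (0 < n)%N -> (1 <= k <= p.-1)%N -> (3 <= q)%N ->
  (4 * q ^ 2 * C <= n)%N ->
  forall x t, q%:R * (SumOp k true (H p k (p.-1 - k) (prob_out1 p C P)) x t
                      - SumOp k false (H p k (p.-1 - k) (prob_out1 p C P)) x t)
              < (2 ^ n * n)%:R ^+ (p - k).
Proof.
move=> V p2 n0 hk q3 hn x t.
set d := (p.-1 - k)%N.
pose W m := H p k d (fun x t => Vf p C P x t d m).
have Hres : forall m, respects (fun j => (j <= k)%N) (fun j => (j <= k)%N)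
                  (fun x t => msg_dist C P x t k.-1 m).
  move=> m x1 x2 t1 t2 Hx Ht; apply: msg_dist_ext.
    by move=> j hj; apply: Hx; lia.
  by move=> j hj; apply: Ht; lia.
have HG : forall x t, H p k d (prob_out1 p C P) x t
    = \sum_(m <- strings C) msg_dist C P x t k.-1 m * W m x t.
  move=> x' t'.
  rewrite (@H_ext R n p k _ (fun x t => \sum_(m <- strings C) msg_dist C P x t k.-1 m * Vf p C P x t d m)).
    by apply: (@Hlin R n p k (fun x t m => msg_dist C P x t k.-1 m) (fun m x t => Vf p C P x t d m)).
  move=> x'' t''; rewrite (@decomp R n p C P x'' t'' p2 d); last by rewrite /d; lia.
  by have -> : (p - 2 - d = k.-1)%N by rewrite /d; lia.
pose al (X : {ffun 'I_n -> bool}) m := msg_dist C P (updx x k X) t k.-1 m.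
pose be (s : 'I_n) m := W m x (updt t k.+1 s).
have Hb : forall b z s, H p k d (prob_out1 p C P) (updx x k (setb z s b)) (updt t k.+1 s)
     = \sum_(m <- strings C) al (setb z s b) m * be s m.
  move=> b z s; rewrite HG; apply: eq_bigr => m _; congr (_ * _).
    apply: msg_dist_ext => // j hj; rewrite /updt; case: eqP => // E; lia.
  apply: (@H_resp R n p k (fun j => (k < j)%N) (fun j => (k < j)%N)).
  - move=> x1 x2 t1 t2 Hx Ht; apply: Vf_ext; [lia|rewrite /d; lia| |].
      by move=> j hj; apply: Hx; rewrite /d in hj; lia.
    by move=> j hj; apply: Ht; rewrite /d in hj; lia.
  - by move=> j hj; rewrite /updx; case: eqP => // E; lia.
  - by [].
rewrite /SumOp.
rewrite (eq_bigr (fun z => \sum_(s < n) \sum_(m <- strings C) al (setb z s true) m * be s m)); last first.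
  by move=> z _; apply: eq_bigr => s _; rewrite Hb.
rewrite [X in _ * (_ - X)](eq_bigr (fun z => \sum_(s < n) \sum_(m <- strings C) al (setb z s false) m * be s m)); last first.
  by move=> z _; apply: eq_bigr => s _; rewrite Hb.
rewrite -sumrB (eq_bigr (fun z => \sum_(s < n) \sum_(m <- strings C) (al (setb z s true) m - al (setb z s false) m) * be s m)); last first.
  move=> z _; rewrite -sumrB; apply: eq_bigr => s _; rewrite -sumrB; apply: eq_bigr => m _.
  by rewrite mulrBl.
have M0 : (0:R) < (2 ^ n * n)%:R by rewrite ltr0n muln_gt0 expn_gt0.
have -> : (p - k = d.+1)%N by rewrite /d; lia.
rewrite exprSr.
apply: index_lemma => //.
- by rewrite exprn_gt0.
- move=> X m; have [H0 _] := msg_dist_dist (updx x k X) t V (i := k.-1) ltac:(lia); exact: H0.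
- move=> X; have [_ H1] := msg_dist_dist (updx x k X) t V (i := k.-1) ltac:(lia); exact: H1.
- move=> s m; rewrite /be /W.
  have := @H_bounds R n p k (fun x t => Vf p C P x t d m) 0 1 _ d x (updt t k.+1 s).
  rewrite mul0r mul1r; apply.
  move=> x' t'; apply: Vf_bounds => //; rewrite /d; lia.
Qed.

Theorem theorem11 (R : realType) (n p C : nat) (P : protocol R n) :
  (0 < n)%N -> (2 <= p)%N ->
  valid_protocol p C P ->
  (forall (x : nat -> 'I_n -> bool) (t : nat -> 'I_n) (b : bool),
      chain_case p x t b -> 2%:R / 3%:R <= success_prob p C P x t b) ->
  (n <= 36 * p ^ 2 * C)%N.
Proof.
move=> n0 p2 V Hs.
rewrite leqNgt; apply/negP => hn.
set q := (3 * p.-1)%N.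
have q3 : (3 <= q)%N by rewrite /q; lia.
have hn' : (4 * q ^ 2 * C <= n)%N.
  apply: ltnW; apply: leq_ltn_trans hn.
  have -> : (4 * q ^ 2 * C = 36 * p.-1 ^ 2 * C)%N by rewrite /q expnMn; lia.
  by apply: leq_mul => //; apply: leq_mul => //; rewrite leq_exp2r // leq_pred.
set g := prob_out1 p C P.
set M0 : R := (2 ^ n * n)%:R.
pose x0 := fun (_ : nat) (_ : 'I_n) => false.
pose t0 := fun (_ : nat) => Ordinal n0.
have Hl0 : forall bb, links x0 t0 (p.-1 - p.-1) bb by move=> bb; rewrite subnn => i; lia.
have Hup : H p 0 p.-1 g x0 t0 <= 3%:R^-1 * M0 ^+ p.-1.
  have Hb : forall j, (1 <= j <= p.-1)%N -> (j <= 0)%N = false by move=> j hj; apply/negP; lia.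
  have Hg : forall x t, links x t p.-1 false -> 0 <= g x t <= 3%:R^-1.
    move=> x t Hl; have := prob_bounds x t V p2; case/andP => -> _ /=.
    have := Hs x t false Hl; rewrite /success_prob -/g; lra.
  have := @H_promise R n p 0 false g 0 (3%:R^-1) Hb Hg p.-1 (leqnn _) x0 t0 (Hl0 false).
  by case/andP.
have Hlo : 2%:R / 3%:R * M0 ^+ p.-1 <= H p p.-1 p.-1 g x0 t0.
  have Hb : forall j, (1 <= j <= p.-1)%N -> (j <= p.-1)%N = true by move=> j hj; apply/idP; lia.
  have Hg : forall x t, links x t p.-1 true -> 2%:R / 3%:R <= g x t <= 1.
    move=> x t Hl; have := prob_bounds x t V p2; case/andP => _ -> .
    have := Hs x t true Hl; rewrite /success_prob -/g => ->; by [].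
  have := @H_promise R n p p.-1 true g (2%:R / 3%:R) 1 Hb Hg p.-1 (leqnn _) x0 t0 (Hl0 true).
  by case/andP.
have Hsum : forall k, (1 <= k <= p.-1)%N ->
    q%:R * (H p k p.-1 g x0 t0 - H p 0 p.-1 g x0 t0) < k%:R * M0 ^+ p.-1.
  elim=> [//|k IH] hk.
  have T := @tele R n p k.+1 g q%:R n0 hk (ler0n _ _) (@level R n p C P k.+1 q V p2 n0 hk q3 hn') x0 t0.
  case: k IH hk T => [|k] IH hk T; first by rewrite mul1r.
  have IH' := IH ltac:(lia).
  have -> : H p k.+2 p.-1 g x0 t0 - H p 0 p.-1 g x0 t0
      = (H p k.+2 p.-1 g x0 t0 - H p k.+1 p.-1 g x0 t0) + (H p k.+1 p.-1 g x0 t0 - H p 0 p.-1 g x0 t0).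
    by rewrite addrA subrK.
  have E : (k.+2%:R : R) = k.+1%:R + 1 by rewrite natr1.
  rewrite mulrDr E mulrDl mul1r; simpl in T; lra.
have F := Hsum p.-1 ltac:(lia).
have Eq : (q%:R : R) = 3%:R * (p.-1)%:R by rewrite /q natrM.
have X0 : (0:R) <= M0 ^+ p.-1 by rewrite exprn_ge0 // ler0n.
have P0 : (0:R) <= (p.-1)%:R by rewrite ler0n.
have : q%:R * (3%:R^-1 * M0 ^+ p.-1) <= q%:R * (H p p.-1 p.-1 g x0 t0 - H p 0 p.-1 g x0 t0).
  rewrite ler_wpM2l ?ler0n //. 
  have : 2%:R / 3%:R * M0 ^+ p.-1 - 3%:R^-1 * M0 ^+ p.-1 = 3%:R^-1 * M0 ^+ p.-1.
    by field.
  lra.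
rewrite Eq in F * => Hq.
have E3 : 3%:R * (p.-1)%:R * (3%:R^-1 * M0 ^+ p.-1) = (p.-1)%:R * M0 ^+ p.-1 :> R by field.
lra.
Qed.
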